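(* Let $A$ be an $n\times n$ Hermitian matrix ($n\ge2$) with eigenvalues $\lambda_1\ge\dots\ge\lambda_n$ and corresponding orthonormal eigenvectors $v_1,\dots,v_n$; write $v_{i,k}$ for the $k$-th component of $v_i$. Fix $k\in\{1,\dots,n\}$ and let $\mu_{k,1}\ge\dots\ge\mu_{k,n-1}$ be the eigenvalues of $A_k$. Set $U^k_\ell:=\sum_{i=\ell}^n|v_{i,k}|^2$ and $L^k_{r+1}:=\sum_{i=1}^{r+1}|v_{i,k}|^2$. Then for all $1\le\ell\le r\le n-1$ with $U^k_\ell\ne0$ and $L^k_{r+1}\ne0$, $$\sum_{j=\ell}^r\lambda_{j+1}+\sum_{j=\ell}^r\frac{|v_{j+1,k}|^2}{L^k_{r+1}}(\lambda_\ell-\lambda_{j+1})\le\sum_{j=\ell}^r\mu_{k,j}\le\sum_{j=\ell}^r\lambda_j-\sum_{j=\ell}^r\frac{|v_{j,k}|^2}{U^k_\ell}(\lambda_j-\lambda_{r+1}).$$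
   Context: For an $n\times n$ matrix $A$ and $k\in\{1,\dots,n\}$, $A_k$ denotes the $(n-1)\times(n-1)$ principal submatrix obtained by deleting the $k$-th row and $k$-th column of $A$. *)

(* Defs.v *)
From mathcomp Require Import all_boot all_order all_algebra.
Set Implicit Arguments. Unset Strict Implicit. Unset Printing Implicit Defensive.
Import Order.TTheory GRing.Theory Num.Theory.
Local Open Scope ring_scope.

Definition principal_del (R : Type) (n : nat) (k : 'I_n) (A : 'M[R]_n)
  : 'M[R]_n.-1 := row' k (col' k A).

Definition hermitian_mx (C : numClosedFieldType) (n : nat) (A : 'M[C]_n) : Prop :=
  forall i j : 'I_n, A j i = (A i j)^*.

(* Main.v *)
Require Import Defs.
From mathcomp Require Import all_boot all_order all_algebra perm zify ring.
Set Implicit Arguments. Unset Strict Implicit. Unset Printing Implicit Defensive.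
Import Order.TTheory GRing.Theory Num.Theory.
Local Open Scope ring_scope.
Local Open Scope sesquilinear_scope.

Section S.
Variable C : numClosedFieldType.

Lemma trace_diag m N (X : 'M[C]_(m,N)) (d : 'rV[C]_N) :
  \tr (X *m diag_mx d *m X^t*) = \sum_j d 0 j * \sum_s X s j * (X s j)^*.
Proof.
rewrite /mxtrace.
under eq_bigr => s _ do rewrite mxE.
rewrite exchange_big /=; apply: eq_bigr => j _.
rewrite mulr_sumr; apply: eq_bigr => s _.
by rewrite mul_mx_diag !mxE mulrA [X s j * _]mulrC.
Qed.

Lemma trmxC_mul m n p (X : 'M[C]_(m,n)) (Y : 'M[C]_(n,p)) :
  (X *m Y)^t* = Y^t* *m X^t*.
Proof. by rewrite trmx_mul map_mxM. Qed.

Lemma sum_diag_1 m N (X : 'M[C]_(m,N)) : X *m X^t* = 1%:M ->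
  \sum_j \sum_s X s j * (X s j)^* = m%:R.
Proof.
move=> XX; rewrite exchange_big /=.
rewrite (eq_bigr (fun _ => 1)); last first.
  move=> s _; move/matrixP: XX => /(_ s s); rewrite !mxE eqxx mulr1n => <-.
  by apply: eq_bigr => j _; rewrite !mxE.
by rewrite sumr_const card_ord.
Qed.
Lemma col_norm_le1 m n (F : 'M[C]_(m,n)) : F *m F^t* = 1%:M ->
  forall j, \sum_s F s j * (F s j)^* <= 1.
Proof.
move=> FF j.
set Q := F^t* *m F.
have QQ : Q *m Q = Q by rewrite /Q mulmxA -[F^t* *m F *m F^t*]mulmxA FF mulmx1.
have Qjj : Q j j = \sum_s F s j * (F s j)^*.
  by rewrite /Q !mxE; apply: eq_bigr => s _; rewrite !mxE mulrC.
have Qc : forall t, Q t j = (Q j t)^*.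
  move=> t; rewrite /Q !mxE rmorph_sum; apply: eq_bigr => s _.
  by rewrite !mxE rmorphM /= conjCK mulrC.
have Q0 : 0 <= Q j j by rewrite Qjj sumr_ge0 // => s _; exact: mul_conjC_ge0.
rewrite -Qjj.
have : Q j j * (Q j j)^* <= Q j j.
  have H : Q j j = \sum_t Q j t * (Q j t)^*.
    by rewrite -{1}QQ mxE; apply: eq_bigr => t _; rewrite Qc.
  by rewrite [X in _ <= X]H (bigD1 j) //= lerDl sumr_ge0 // => t _; rewrite mul_conjC_ge0.
rewrite geC0_conj //.
have [->|nz] := eqVneq (Q j j) 0; first by rewrite ler01.
have pos : 0 < Q j j by rewrite lt_def nz Q0.
rewrite -subr_ge0 -{1}(mulr1 (Q j j)) -mulrBr pmulr_rge0 // subr_ge0 //.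
Qed.
Lemma exists_ortho_ker a b m (M : 'M[C]_(a,b)) : (b + m <= a)%N ->
  exists c : 'M[C]_(m,a), c *m c^t* = 1%:M /\ c *m M = 0.
Proof.
move=> hab.
set K := kermx M.
have hm : (m <= \rank K)%N.
  rewrite mxrank_ker; have := rank_leq_col M; lia.
set S := schmidt (row_base K).
have SU : S *m S^t* = 1%:M.
  by apply/unitarymxP; apply: schmidt_unitarymx; exact: rank_leq_col.
have SK : (S <= K)%MS.
  by rewrite /S (eqmx_schmidt_free (row_base_free K)) eq_row_base.
have SM : S *m M = 0 by apply/sub_kermxP.
exists (\matrix_(i, j) S (widen_ord hm i) j); split.
  apply/matrixP => i i'; rewrite !mxE.
  move/matrixP: SU => /(_ (widen_ord hm i) (widen_ord hm i')).
  rewrite !mxE /= => <-; by apply: eq_bigr => j _; rewrite !mxE.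
apply/matrixP => i t; rewrite mxE [RHS]mxE.
move/matrixP: SM => /(_ (widen_ord hm i) t).
rewrite mxE [RHS]mxE => H; apply: etrans H; by apply: eq_bigr => j _; rewrite !mxE.
Qed.

Lemma Zlemma n (A V : 'M[C]_n) (lo : 'rV[C]_n) (k : 'I_n) a m b
  (Y : 'M[C]_(a,n)) (e : 'rV[C]_a) (ex : pred 'I_n) (f : 'I_b -> 'I_n) :
  V *m V^t* = 1%:M -> A = V *m diag_mx lo *m V^t* ->
  Y *m Y^t* = 1%:M -> Y *m A *m Y^t* = diag_mx e -> (forall j, Y j k = 0) ->
  (forall i, ex i -> exists t, i = f t) -> (b + m <= a)%N ->
  \sum_(i | ~~ ex i) V k i * (V k i)^* != 0 ->
  exists (w : 'I_a -> C) (d : 'I_n -> C),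
  \sum_j e 0 j * w j = \sum_i lo 0 i * d i /\
     (forall j, 0 <= w j <= 1) /\ \sum_j w j = m%:R /\
     (forall i, 0 <= d i) /\ (forall i, ex i -> d i = 0) /\
     (forall i, ~~ ex i -> d i + V k i * (V k i)^* / \sum_(i | ~~ ex i) V k i * (V k i)^* <= 1) /\
     \sum_i d i = m%:R.
Proof.
move=> VV AV YY YAY Yk exf hab Unz.
set U := \sum_(i | ~~ ex i) V k i * (V k i)^*.
pose M := \matrix_(j, t) (Y *m V) j (f t).
have [c [cc cM]] := exists_ortho_ker M hab.
pose Z := c *m Y. pose G := Z *m V.
exists (fun j => \sum_s c s j * (c s j)^*), (fun i => \sum_s G s i * (G s i)^*).
have ZZ : Z *m Z^t* = 1%:M.
  by rewrite /Z trmxC_mul mulmxA -(mulmxA c) YY mulmx1 cc.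
have GG : G *m G^t* = 1%:M.
  by rewrite /G trmxC_mul mulmxA -(mulmxA Z) VV mulmx1 ZZ.
have Gex : forall i s, ex i -> G s i = 0.
  move=> i s /exf [t ->].
  move/matrixP: cM => /(_ s t); rewrite mxE [RHS]mxE => H; apply: etrans H.
  rewrite /G /Z -mulmxA mxE; apply: eq_bigr => j _; by rewrite !mxE.
have Zk : forall s, Z s k = 0.
  by move=> s; rewrite /Z mxE big1 // => j _; rewrite Yk mulr0.
have GVk : forall s, \sum_i G s i * (V k i)^* = 0.
  move=> s; apply: etrans (Zk s).
  rewrite -[Z]mulmx1 -VV mulmxA mxE.
  by apply: eq_bigr => i _; rewrite !mxE.
split; [|split; [|split; [|split; [|split; [|split]]]]].
- have T1 : \tr (Z *m A *m Z^t*) = \sum_j e 0 j * \sum_s c s j * (c s j)^*.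
    by rewrite -trace_diag -YAY /Z (trmxC_mul c Y) !mulmxA.
  have T2 : \tr (Z *m A *m Z^t*) = \sum_i lo 0 i * \sum_s G s i * (G s i)^*.
    by rewrite -trace_diag AV /G (trmxC_mul Z V) !mulmxA.
  by rewrite -T1 -T2.
- move=> j; rewrite sumr_ge0 ?col_norm_le1 // => s _; exact: mul_conjC_ge0.
- exact: sum_diag_1.
- by move=> i; rewrite sumr_ge0 // => s _; exact: mul_conjC_ge0.
- by move=> i /Gex Gi; rewrite big1 // => s _; rewrite Gi mul0r.
- move=> i nexi.
  have U0 : 0 < U.
    rewrite lt_def Unz sumr_ge0 // => j _; exact: mul_conjC_ge0.
  pose sg := sqrtC (U^-1).
  have sg0 : 0 <= sg by rewrite sqrtC_ge0 invr_ge0 ltW.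
  have sgc : sg^* = sg by rewrite geC0_conj.
  have sgsg : sg * sg = U^-1 by rewrite -expr2 sqrtCK.
  pose u : 'rV_n := \row_i ((~~ ex i)%:R * V k i * sg).
  have uc : forall i, (u 0 i)^* = (~~ ex i)%:R * (V k i)^* * sg.
    by move=> j; rewrite mxE !rmorphM /= conjC_nat sgc.
  have Gu : G *m u^t* = 0.
    apply/matrixP => s z; rewrite ord1 mxE [RHS]mxE.
    apply: (etrans (_ : _ = (\sum_j G s j * (V k j)^*) * sg)); last by rewrite GVk mul0r.
    rewrite mulr_suml; apply: eq_bigr => j _.
    rewrite [X in _ * X]mxE [X in _ * X^*]mxE uc; case: (boolP (ex j)) => exj /=.
      by rewrite Gex // !mul0r.
    by rewrite mul1r mulrA.
  have uG : u *m G^t* = 0.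
    have := congr1 (fun X => X^t*) Gu.
    by rewrite trmxC_mul trmxCK => ->; apply/matrixP => p q; rewrite !mxE conjC0.
  have uu : u *m u^t* = 1%:M.
    apply/matrixP => z z'; rewrite !ord1 !mxE eqxx mulr1n.
    rewrite -(mulfV Unz) mulr_suml.
    rewrite (bigID (fun j => ex j)) /= big1 ?add0r; last first.
      by move=> j exj; rewrite !mxE exj !mul0r.
    apply: eq_bigr => j nexj; rewrite [X in _ * X]mxE [X in _ * X^*]mxE uc [u 0 j]mxE (negPf nexj) /= !mul1r.
    by rewrite -sgsg mulrACA [sg * _]mulrC.
  pose F := col_mx G u.
  have FF : F *m F^t* = 1%:M.
    rewrite /F tr_col_mx (@map_row_mx _ _ Num.Def.conjC) mul_col_row.
    by rewrite GG Gu uG uu -scalar_mx_block.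
  have := col_norm_le1 FF i.
  rewrite big_split_ord /= big_ord1.
  under eq_bigr => s _ do rewrite /F col_mxEu.
  rewrite /F col_mxEd uc [u ord0 i]mxE (negPf nexi) /= !mul1r.
  suff -> : V k i * sg * ((V k i)^* * sg) = V k i * (V k i)^* / U by [].
  by rewrite mulrACA sgsg.
- exact: sum_diag_1.
Qed.
Lemma char_poly_conj N (P D : 'M[C]_N) : P \in unitmx ->
  char_poly (invmx P *m D *m P) = char_poly D.
Proof.
move=> Pu; rewrite /char_poly /char_poly_mx.
have -> : 'X%:M - map_mx polyC (invmx P *m D *m P) =
  map_mx polyC (invmx P) *m ('X%:M - map_mx polyC D) *m map_mx polyC P.
  rewrite mulmxBr mulmxBl scalar_mxC !map_mxM; congr (_ - _).
  by rewrite -mulmxA -map_mxM mulVmx // map_mx1 mulmx1.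
rewrite !det_mulmx !det_map_mx mulrC mulrA -rmorphM -det_mulmx mulmxV //.
by rewrite det1 mul1r.
Qed.

Lemma rowsel_conj a N n (t : 'I_a -> 'I_N) (X : 'M[C]_(N,n)) (B : 'M[C]_n) j j' :
  ((\matrix_(j,q) X (t j) q) *m B *m (\matrix_(j,q) X (t j) q)^t*) j j' =
  (X *m B *m X^t*) (t j) (t j').
Proof.
rewrite !mxE; apply: eq_bigr => q _; rewrite !mxE; congr (_ * _).
by apply: eq_bigr => p _; rewrite !mxE.
Qed.

Lemma spectral_sorted N (Ak : 'M[C]_N) (mu : nat -> C) : Ak^t* = Ak ->
  char_poly Ak = \prod_(j < N) ('X - (mu j.+1)%:P) ->
  exists Q : 'M[C]_N, Q *m Q^t* = 1%:M /\
    Q *m Ak *m Q^t* = diag_mx (\row_(j < N) mu j.+1).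
Proof.
move=> Ah Achar.
have Anorm : Ak \is normalmx by apply/normalmxP; rewrite Ah.
have AP := orthomx_spectralP Anorm.
set P := spectralmx Ak in AP; set d := spectral_diag Ak in AP.
have Pu : P \is unitarymx by exact: spectral_unitarymx.
have PP : P *m P^t* = 1%:M by apply/unitarymxP.
have Pinv : invmx P = P^t* by rewrite invmx_unitary.
have PAP : P *m Ak *m P^t* = diag_mx d.
  rewrite {1}AP Pinv !mulmxA PP mul1mx -mulmxA PP mulmx1 //.
have cd : char_poly Ak = \prod_(i < N) ('X - (d 0 i)%:P).
  rewrite AP char_poly_conj ?unitarymx_unit // char_poly_trig ?diag_mx_is_trig //.
  by apply: eq_bigr => i _; rewrite mxE eqxx mulr1n.
pose s := [tuple mu (val j).+1 | j < N].
pose t := [tuple d 0 j | j < N].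
have pst : perm_eq s t.
  apply: prod_XsubC_eq.
  rewrite /s /t /= !big_map.
  transitivity (char_poly Ak); [rewrite Achar; by [] | rewrite cd; by []].
have [p sp] := tuple_permP pst.
have Hp : forall j, mu (val j).+1 = d 0 (p j).
  move=> j; have sp' : s = [tuple tnth t (p i) | i < N] := val_inj sp.
  have := congr1 (fun z => tnth z j) sp'.
  by rewrite /= !tnth_mktuple.
pose Q := \matrix_(j, q) P (p j) q.
exists Q; split.
  apply/matrixP => j j'; have := rowsel_conj p P 1%:M j j'.
  rewrite mulmx1 => ->; rewrite mulmx1 PP !mxE.
  by rewrite (inj_eq perm_inj).
apply/matrixP => j j'; rewrite rowsel_conj PAP !mxE (inj_eq perm_inj) Hp.
done.
Qed.
Lemma Ysel_lemma n N (A : 'M[C]_n) (QE : 'M[C]_(N,n)) (e : 'rV[C]_N) k a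
  (t : 'I_a -> 'I_N) : injective t -> QE *m QE^t* = 1%:M ->
  QE *m A *m QE^t* = diag_mx e -> (forall j, QE j k = 0) ->
  (\matrix_(j, q) QE (t j) q) *m (\matrix_(j, q) QE (t j) q)^t* = 1%:M /\
  (\matrix_(j, q) QE (t j) q) *m A *m (\matrix_(j, q) QE (t j) q)^t*
     = diag_mx (\row_j e 0 (t j)) /\
  forall j, (\matrix_(j, q) QE (t j) q) j k = 0.
Proof.
move=> tinj QQ QA Qk; split; [|split].
- apply/matrixP => j j'; have := rowsel_conj t QE 1%:M j j'.
  rewrite !mulmx1 => ->; rewrite QQ !mxE.
  by rewrite (inj_eq tinj).
- apply/matrixP => j j'; rewrite rowsel_conj QA !mxE (inj_eq tinj).
  done.
- by move=> j; rewrite mxE Qk.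
Qed.
Lemma sum_gen (F : nat -> C) a b s K : (s <= a)%N -> (b <= K + s)%N ->
  \sum_(a <= i < b) F i =
  \sum_(i < K | (a <= i + s)%N && (i + s < b)%N) F (i + s)%N.
Proof.
move=> sa bK.
rewrite (big_nat_widen _ _ _ _ _ bK) (big_nat_widenl _ _ _ _ _ sa).
rewrite -{1}[s]add0n big_addn addnK big_mkord.
by apply: eq_bigl => i /=; rewrite andbC.
Qed.

Lemma kyfan_low a (x w : 'I_a -> C) (P : pred 'I_a) c m :
  (forall j, 0 <= w j <= 1) -> \sum_j w j = m%:R -> \sum_(j | P j) (1 : C) = m%:R ->
  (forall j, P j -> x j <= c) -> (forall j, ~~ P j -> c <= x j) ->
  \sum_(j | P j) x j <= \sum_j x j * w j.
Proof.
move=> w01 sw sP xP xnP.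
have E1 : \sum_j x j * w j = \sum_j (x j - c) * w j + c * m%:R.
  by rewrite -sw mulr_sumr -big_split /=; apply: eq_bigr => j _; rewrite mulrBl subrK.
have E2 : \sum_(j | P j) x j = \sum_(j | P j) (x j - c) + c * m%:R.
  by rewrite -sP mulr_sumr -big_split /=; apply: eq_bigr => j _; rewrite mulr1 subrK.
rewrite E1 E2 lerD2r big_mkcond /= ler_sum // => j _.
case: ifP => Pj.
  have /andP [w0 w1] := w01 j.
  rewrite -subr_ge0 -{2}[x j - c]mulr1 -mulrBr mulr_le0 //.
    by rewrite subr_le0 xP.
  by rewrite subr_le0.
have /andP [w0 _] := w01 j.
by rewrite mulr_ge0 // subr_ge0 xnP // Pj.
Qed.

Lemma kyfan_high a (x w : 'I_a -> C) (P : pred 'I_a) c m :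
  (forall j, 0 <= w j <= 1) -> \sum_j w j = m%:R -> \sum_(j | P j) (1 : C) = m%:R ->
  (forall j, P j -> c <= x j) -> (forall j, ~~ P j -> x j <= c) ->
  \sum_j x j * w j <= \sum_(j | P j) x j.
Proof.
move=> w01 sw sP xP xnP.
have H := @kyfan_low a (fun j => - x j) w P (- c) m w01 sw sP.
have {}H : \sum_(j | P j) - x j <= \sum_j - (x j * w j).
  rewrite [X in _ <= X](eq_bigr (fun j => - x j * w j)); last by move=> j _; rewrite mulNr.
  apply: H.
    by move=> j Pj; rewrite lerN2 xP.
  by move=> j Pj; rewrite lerN2 xnP.
by move: H; rewrite !sumrN lerN2.
Qed.

Lemma lp_up n (y d q : 'I_n -> C) (P ex : pred 'I_n) c m :
  (forall i, 0 <= d i) -> (forall i, ex i -> d i = 0) ->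
  (forall i, ~~ ex i -> d i + q i <= 1) -> \sum_i d i = m%:R ->
  \sum_(i | P i) (1 : C) = m%:R -> (forall i, P i -> ~~ ex i) ->
  (forall i, P i -> c <= y i) -> (forall i, ~~ P i -> ~~ ex i -> y i <= c) ->
  \sum_i y i * d i <= \sum_(i | P i) (y i - q i * (y i - c)).
Proof.
move=> d0 dex dq sd sP Pex yP ynP.
have E1 : \sum_i y i * d i = \sum_i (y i - c) * d i + c * m%:R.
  by rewrite -sd mulr_sumr -big_split /=; apply: eq_bigr => j _; rewrite mulrBl subrK.
have E2 : \sum_(i | P i) (y i - q i * (y i - c)) =
          \sum_(i | P i) (y i - c) * (1 - q i) + c * m%:R.
  rewrite -sP mulr_sumr -big_split /=; apply: eq_bigr => j _.
  ring.
rewrite E1 E2 lerD2r [X in _ <= X]big_mkcond /= ler_sum // => i _.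
case: ifP => Pi.
  rewrite ler_wpM2l // ?subr_ge0 ?yP //.
  by rewrite lerBrDr dq // Pex.
case: (boolP (ex i)) => exi; first by rewrite dex // mulr0.
by rewrite mulr_le0_ge0 // subr_le0 ynP // Pi.
Qed.

Lemma lp_low n (y d q : 'I_n -> C) (P ex : pred 'I_n) c m :
  (forall i, 0 <= d i) -> (forall i, ex i -> d i = 0) ->
  (forall i, ~~ ex i -> d i + q i <= 1) -> \sum_i d i = m%:R ->
  \sum_(i | P i) (1 : C) = m%:R -> (forall i, P i -> ~~ ex i) ->
  (forall i, P i -> y i <= c) -> (forall i, ~~ P i -> ~~ ex i -> c <= y i) ->
  \sum_(i | P i) (y i + q i * (c - y i)) <= \sum_i y i * d i.
Proof.
move=> d0 dex dq sd sP Pex yP ynP.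
have H := @lp_up n (fun i => - y i) d q P ex (- c) m d0 dex dq sd sP Pex.
have {}H : \sum_i - (y i * d i) <= \sum_(i | P i) - (y i + q i * (c - y i)).
  rewrite [X in X <= _](eq_bigr (fun i => - y i * d i)); last by move=> j _; rewrite mulNr.
  rewrite [X in _ <= X](eq_bigr (fun i => - y i - q i * (- y i - - c))); last first.
    move=> j _; ring.
  apply: H.
    by move=> j Pj; rewrite lerN2 yP.
  by move=> j Pj exj; rewrite lerN2 ynP.
by move: H; rewrite !sumrN lerN2.
Qed.
End S.
Lemma lam_mono_gen (C : numClosedFieldType) (lam : nat -> C) n :
  (forall i, (1 <= i < n)%N -> lam i.+1 <= lam i) ->
  forall i j, (1 <= i)%N -> (i <= j)%N -> (j <= n)%N -> lam j <= lam i.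
Proof.
move=> H i j i1; elim: j => [|j IH]; first by lia.
rewrite leq_eqVlt => /orP [/eqP <- // | ij] jn.
apply: le_trans (H j _) (IH _ _); lia.
Qed.
Local Close Scope sesquilinear_scope.
Theorem theorem3p3 (C : numClosedFieldType) (n : nat) (A : 'M[C]_n)
  (lam : nat -> C) (v : nat -> 'cV[C]_n) (k : 'I_n) (mu : nat -> C)
  (l r : nat) :
  (2 <= n)%N ->
  hermitian_mx A ->
  (forall i, (1 <= i < n)%N -> lam i.+1 <= lam i) ->
  (forall i, (1 <= i <= n)%N -> A *m v i = lam i *: v i) ->
  (forall i j, (1 <= i <= n)%N -> (1 <= j <= n)%N ->
     \sum_(p < n) (v i p 0)^* * v j p 0 = (i == j)%:R) ->
  char_poly (principal_del k A) = \prod_(1 <= j < n) ('X - (mu j)%:P) ->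
  (forall j, (1 <= j < n.-1)%N -> mu j.+1 <= mu j) ->
  (1 <= l)%N -> (l <= r)%N -> (r <= n.-1)%N ->
  \sum_(l <= i < n.+1) `|v i k 0| ^+ 2 != 0 ->
  \sum_(1 <= i < r.+2) `|v i k 0| ^+ 2 != 0 ->
  \sum_(l <= j < r.+1) lam j.+1
    + \sum_(l <= j < r.+1)
        (`|v j.+1 k 0| ^+ 2 / \sum_(1 <= i < r.+2) `|v i k 0| ^+ 2)
          * (lam l - lam j.+1)
  <= \sum_(l <= j < r.+1) mu j
  /\
  \sum_(l <= j < r.+1) mu j
  <= \sum_(l <= j < r.+1) lam j
    - \sum_(l <= j < r.+1)
        (`|v j k 0| ^+ 2 / \sum_(l <= i < n.+1) `|v i k 0| ^+ 2)
          * (lam j - lam r.+1).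
Proof.
Local Open Scope sesquilinear_scope.
move=> n2 Hh Hlam Hev Horth Hchar Hmu l1 lr rn HU HL.
have lam_mono := lam_mono_gen Hlam.
have mu_mono := lam_mono_gen Hmu.
pose V : 'M[C]_n := \matrix_(p, i) v i.+1 p 0.
have VtV : V^t* *m V = 1%:M.
  apply/matrixP => i j; rewrite !mxE.
  have := Horth i.+1 j.+1 (ltn_ord i) (ltn_ord j); rewrite eqSS => <-.
  by apply: eq_bigr => p _; rewrite !mxE.
have VV : V *m V^t* = 1%:M := mulmx1C VtV.
pose lo : 'rV[C]_n := \row_(i < n) lam i.+1.
have AVV : A *m V = V *m diag_mx lo.
  apply/matrixP => p i; rewrite mul_mx_diag !mxE.
  have := Hev i.+1 (ltn_ord i); move/matrixP => /(_ p 0); rewrite !mxE => H.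
  rewrite mulrC -H; by apply: eq_bigr => q _; rewrite !mxE.
have AV : A = V *m diag_mx lo *m V^t* by rewrite -AVV -mulmxA VV mulmx1.
pose Ak := principal_del k A.
have Akh : Ak^t* = Ak.
  apply/matrixP => a b; rewrite /Ak /principal_del !mxE.
  by rewrite (Hh (lift k a) (lift k b)) conjCK.
have Akc : char_poly Ak = \prod_(j < n.-1) ('X - (mu j.+1)%:P).
  by rewrite /Ak Hchar big_add1 big_mkord.
have [Q [QQ QAQ]] := spectral_sorted Akh Akc.
pose E : 'M[C]_(n.-1, n) := \matrix_(a, b) ((b == lift k a)%:R).
have EM : forall m (M : 'M[C]_(n,m)) a q, (E *m M) a q = M (lift k a) q.
  move=> m M a q; rewrite mxE (bigD1 (lift k a)) //= mxE eqxx mul1r big1 ?addr0 //.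
  by move=> p /negPf ne; rewrite mxE ne mul0r.
have ME : forall m (M : 'M[C]_(m,n)) a q, (M *m E^t*) a q = M a (lift k q).
  move=> m M a q; rewrite mxE (bigD1 (lift k q)) //= !mxE eqxx conjC1 mulr1 big1 ?addr0 //.
  by move=> p /negPf ne; rewrite !mxE ne conjC0 mulr0.
have EAE : E *m A *m E^t* = Ak.
  by apply/matrixP => a b; rewrite ME EM /Ak /principal_del !mxE.
have EE : E *m E^t* = 1%:M.
  by apply/matrixP => a b; rewrite ME !mxE (inj_eq lift_inj) eq_sym.
have Ek : forall a, E a k = 0.
  by move=> a; rewrite mxE (negPf (neq_lift k a)).
pose QE := Q *m E.
have QEQE : QE *m QE^t* = 1%:M.
  by rewrite /QE trmxC_mul mulmxA -(mulmxA Q) EE mulmx1 QQ.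
have QEA : QE *m A *m QE^t* = diag_mx (\row_(j < n.-1) mu j.+1).
  rewrite /QE trmxC_mul.
  have -> : Q *m E *m A *m (E^t* *m Q^t*) = Q *m (E *m A *m E^t*) *m Q^t*.
    by rewrite !mulmxA.
  by rewrite EAE QAQ.
have QEk : forall j, QE j k = 0.
  by move=> j; rewrite mxE big1 // => a _; rewrite Ek mulr0.
split.
-
  have [a Ea] : {a | a = (n.-1 - l.-1)%N} by exists (n.-1 - l.-1)%N.
  have ha : forall j : 'I_a, (j + l.-1 < n.-1)%N.
    by move=> j; have := ltn_ord j; lia.
  pose tau := fun j : 'I_a => Ordinal (ha j).
  have Ytinj : injective tau.
    by move=> x y /(congr1 val) /= /eqP; rewrite eqn_add2r => /eqP /val_inj.
  have [YY [YAY Yk]] := Ysel_lemma Ytinj QEQE QEA QEk.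
  have hf : forall t : 'I_(n - r.+1), (t + r.+1 < n)%N.
    by move=> t; have := ltn_ord t; lia.
  pose f := fun t : 'I_(n - r.+1) => Ordinal (hf t).
  pose ex := fun i : 'I_n => (r.+1 <= i)%N.
  have exf : forall i, ex i -> exists t, i = f t.
    move=> i exi; have ht : (i - r.+1 < n - r.+1)%N.
      by move: exi; rewrite /ex; have := ltn_ord i; lia.
    exists (Ordinal ht); apply: val_inj => /=; move: exi; rewrite /ex; lia.
  have hab : (n - r.+1 + (r.+1 - l) <= a)%N by lia.
  have Leq : \sum_(1 <= i < r.+2) `|v i k 0| ^+ 2 =
             \sum_(i | ~~ ex i) V k i * (V k i)^*.
    rewrite (@sum_gen _ _ _ _ 1 n) //; last by lia.
    apply: eq_big => [i|i _]; first by rewrite /ex; have := ltn_ord i; lia.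
    by rewrite addn1 normCK mxE.
  have Lnz : \sum_(i | ~~ ex i) V k i * (V k i)^* != 0 by rewrite -Leq.
  have [w [d [Hwd [w01 [sw [d0 [dex [dq sd]]]]]]]] :=
    Zlemma VV AV YY YAY Yk exf hab Lnz.
  set L := \sum_(i | ~~ ex i) V k i * (V k i)^* in dq Leq.
  have Hwd' : \sum_(j < a) mu (j + l)%N * w j = \sum_i lo 0 i * d i.
    rewrite -Hwd; apply: eq_bigr => j _; rewrite !mxE /=.
    by congr (mu _ * _); lia.
  have cnt1 : \sum_(j < a | (j + l < r.+1)%N) (1 : C) = (r.+1 - l)%:R.
    transitivity (\sum_(l <= i < r.+1) (1 : C)); last by rewrite sumr_const_nat.
    symmetry.
    rewrite (@sum_gen _ _ _ _ l a) //; last by lia.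
    by apply: eq_bigl => j; have := ltn_ord j; lia.
  have KF := @kyfan_high _ a (fun j => mu (j + l)%N) w
    (fun j => (j + l < r.+1)%N) (mu r) (r.+1 - l) w01 sw cnt1.
  have KF' : \sum_(j < a) mu (j + l)%N * w j <= \sum_(l <= j < r.+1) mu j.
    have -> : \sum_(l <= j < r.+1) mu j = \sum_(j < a | (j + l < r.+1)%N) mu (j + l)%N.
      rewrite (@sum_gen _ _ _ _ l a) //; last by lia.
      by apply: eq_bigl => j; have := ltn_ord j; lia.
    apply: KF.
      move=> j /= Pj; apply: mu_mono; have := ltn_ord j; lia.
    move=> j /= Pj; apply: mu_mono; have := ltn_ord j; lia.
  have cnt2 : \sum_(i < n | (l <= i <= r)%N) (1 : C) = (r.+1 - l)%:R.
    transitivity (\sum_(l <= i < r.+1) (1 : C)); last by rewrite sumr_const_nat.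
    symmetry.
    rewrite (@sum_gen _ _ _ _ 0 n) //; last by lia.
    by apply: eq_bigl => j; have := ltn_ord j; lia.
  have LP := @lp_low _ n (fun i => lo 0 i) d (fun i => V k i * (V k i)^* / L)
    (fun i => (l <= i <= r)%N) ex (lam l) (r.+1 - l) d0 dex dq sd cnt2.
  apply: le_trans KF'; rewrite Hwd'; apply: le_trans (LP _ _ _).
  + rewrite -big_split /= Leq (@sum_gen _ _ _ _ 0 n) //; last by lia.
    rewrite le_eqVlt; apply/orP; left; apply/eqP; apply: eq_big => [i|i _].
      by have := ltn_ord i; lia.
    by rewrite addn0 normCK !mxE.
  + by move=> i /=; rewrite /ex; lia.
  + move=> i /= Pi; rewrite mxE; apply: lam_mono; have := ltn_ord i; lia.
  + move=> i /= Pi exi; rewrite mxE; apply: lam_mono; move: exi; rewrite /ex; have := ltn_ord i; lia.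
-
  have Ytinj : injective (widen_ord rn) by move=> x y /(congr1 val) /= /val_inj.
  have [YY [YAY Yk]] := Ysel_lemma Ytinj QEQE QEA QEk.
  have hb : (l.-1 <= n)%N by lia.
  pose ex := fun i : 'I_n => (i < l.-1)%N.
  have exf : forall i, ex i -> exists t, i = widen_ord hb t.
    by move=> i exi; exists (Ordinal exi); apply: val_inj.
  have hab : (l.-1 + (r.+1 - l) <= r)%N by lia.
  have Ueq : \sum_(l <= i < n.+1) `|v i k 0| ^+ 2 =
             \sum_(i | ~~ ex i) V k i * (V k i)^*.
    rewrite (@sum_gen _ _ _ _ 1 n) //; last by lia.
    apply: eq_big => [i|i _]; first by rewrite /ex; have := ltn_ord i; lia.
    by rewrite addn1 normCK mxE.
  have Unz : \sum_(i | ~~ ex i) V k i * (V k i)^* != 0 by rewrite -Ueq.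
  have [w [d [Hwd [w01 [sw [d0 [dex [dq sd]]]]]]]] :=
    Zlemma VV AV YY YAY Yk exf hab Unz.
  set U := \sum_(i | ~~ ex i) V k i * (V k i)^* in dq Ueq.
  have cnt1 : \sum_(j < r | (l.-1 <= j)%N) (1 : C) = (r.+1 - l)%:R.
    transitivity (\sum_(l <= i < r.+1) (1 : C)); last by rewrite sumr_const_nat.
    symmetry.
    rewrite (@sum_gen _ _ _ _ 1 r) //; last by lia.
    by apply: eq_bigl => j; have := ltn_ord j; lia.
  have KF := @kyfan_low _ r (fun j => mu (widen_ord rn j).+1) w
    (fun j => (l.-1 <= j)%N) (mu l) (r.+1 - l) w01 sw cnt1.
  have KF' : \sum_(l <= j < r.+1) mu j <=
      \sum_j mu (widen_ord rn j).+1 * w j.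
    have <- : \sum_(j < r | (l.-1 <= j)%N) mu (widen_ord rn j).+1
        = \sum_(l <= j < r.+1) mu j.
      rewrite (@sum_gen _ _ _ _ 1 r) //; last by lia.
      apply: eq_big => [j|j _]; first by have := ltn_ord j; lia.
      by rewrite addn1.
    apply: KF.
      move=> j /= Pj; apply: mu_mono; have := ltn_ord j; lia.
    move=> j /= Pj; apply: mu_mono; have := ltn_ord j; lia.
  have cnt2 : \sum_(i < n | (l.-1 <= i < r)%N) (1 : C) = (r.+1 - l)%:R.
    transitivity (\sum_(l <= i < r.+1) (1 : C)); last by rewrite sumr_const_nat.
    symmetry.
    rewrite (@sum_gen _ _ _ _ 1 n) //; last by lia.
    by apply: eq_bigl => j; have := ltn_ord j; lia.
  have LP := @lp_up _ n (fun i => lo 0 i) d (fun i => V k i * (V k i)^* / U)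
    (fun i => (l.-1 <= i < r)%N) ex (lam r.+1) (r.+1 - l) d0 dex dq sd cnt2.
  have Hwd' : \sum_j mu (widen_ord rn j).+1 * w j = \sum_i lo 0 i * d i.
    by rewrite -Hwd; apply: eq_bigr => j _; rewrite !mxE.
  apply: (le_trans KF'); rewrite Hwd'; apply: le_trans (LP _ _ _) _.
  + by move=> i /=; rewrite /ex; lia.
  + move=> i /= Pi; rewrite mxE; apply: lam_mono; lia.
  + move=> i /= Pi exi; rewrite mxE; apply: lam_mono; move: exi; rewrite /ex; have := ltn_ord i; lia.
  rewrite -sumrB Ueq (@sum_gen _ _ _ _ 1 n) //; last by lia.
  rewrite le_eqVlt; apply/orP; left; apply/eqP; apply: eq_big => [i|i _]; first by have := ltn_ord i; lia.
  by rewrite addn1 normCK !mxE.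
Qed.
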